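(* Let $n\ge 1$, $F\in\mathbb{R}[z_1,\dots,z_n]$, and let $Y=\{(z,u)\in\mathbb{C}^{n+1}: F(z)+u=0\}$. Put $$\psi(x,t,z,u)=\Big(\langle x'-z,d_zF(z)\rangle+x_{n+1}-u\Big)^2-t^2\Big(1+\sum_{j=1}^n\big(\tfrac{\partial F}{\partial z_j}(z)\big)^2\Big),$$ for $x=(x',x_{n+1})\in\mathbb{C}^{n+1}$, $x'=(x_1,\dots,x_n)$, $t\in\mathbb{C}$, and let $$\pi:\ \Sigma:=\{(x,t,z,u)\in\mathbb{C}^{n+2}\times\mathbb{C}^{n+1}:\ (z,u)\in Y,\ \psi(x,t,z,u)=0\}\to\mathbb{C}^{n+2},\qquad (x,t,z,u)\mapsto (x,t).$$ If $x\in W_t$, then $(x,t)$ belongs to the critical value set of $\pi$.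
   Context: $\langle a,b\rangle=\sum_j a_jb_j$ and $d_zF=(\partial F/\partial z_1,\dots,\partial F/\partial z_n)$. $\psi$ is the product $\psi_+\psi_-$ of the two phase functions $\psi_\pm=(\langle x'-z,d_zF(z)\rangle+x_{n+1}-u)\pm t\,|(d_zF(z),1)|$, where $|(d_zF(z),1)|$ denotes a square root of $1+\sum_j(\partial F/\partial z_j)^2$. The wave front $W_t\subset\mathbb{C}^{n+1}$ at time $t$ with initial front $Y$ is the set of points $x=(x_1,\dots,x_{n+1})$ of the form $x_j=\pm t\,\frac{1}{|(d_zF(z),1)|}\frac{\partial F}{\partial z_j}(z)+z_j$ ($1\le j\le n$), $x_{n+1}=\pm t\,\frac{1}{|(d_zF(z),1)|}+u$, for some $(z,u)\in Y$ (same sign choice throughout). The critical value set of $\pi$ is the image under $\pi$ of the set of points of $\Sigma$ at which $\pi|_\Sigma$ fails to be a submersion (including singular points of $\Sigma$). *)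

(* Defs.v *)
From mathcomp Require Import all_boot all_algebra.
From mathcomp Require Import mpoly complex reals.
Set Implicit Arguments. Unset Strict Implicit. Unset Printing Implicit Defensive.
Import GRing.Theory Num.Theory.
Local Open Scope ring_scope.

Section WaveFront.
Variable R : realType.
Local Notation C := (complex R).
Variable n : nat.

(* Ambient space C^{n+2} x C^{n+1} = C^N with N = (n+2)+(n+1).
   Coordinates 0..n   : x_1..x_{n+1};   coordinate n+1 : t;
   coordinates n+2..2n+1 : z_1..z_n;   coordinate 2n+2 : u. *)
Definition Ndim := (n.+2 + n.+1)%N.

Definition xidx (j : 'I_n.+1) : 'I_Ndim := lshift n.+1 (widen_ord (leqnSn n.+1) j).
Definition tidx : 'I_Ndim := lshift n.+1 ord_max.
Definition zidx (j : 'I_n) : 'I_Ndim := rshift n.+2 (widen_ord (leqnSn n) j).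
Definition uidx : 'I_Ndim := rshift n.+2 ord_max.

Definition xpidx (j : 'I_n) : 'I_n.+1 := widen_ord (leqnSn n) j.

Definition FC (F : {mpoly R[n]}) : {mpoly C[n]} := map_mpoly (real_complex R) F.

Definition zvars : n.-tuple {mpoly C[Ndim]} := [tuple 'X_(zidx j) | j < n].

Definition Fz (F : {mpoly R[n]}) : {mpoly C[Ndim]} := FC F \mPo zvars.
Definition dFz (F : {mpoly R[n]}) (j : 'I_n) : {mpoly C[Ndim]} :=
  (mderiv j (FC F)) \mPo zvars.

Definition G_Y (F : {mpoly R[n]}) : {mpoly C[Ndim]} := Fz F + 'X_uidx.

Definition psi (F : {mpoly R[n]}) : {mpoly C[Ndim]} :=
  (\sum_(j < n) ('X_(xidx (xpidx j)) - 'X_(zidx j)) * dFz F j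
     + 'X_(xidx ord_max) - 'X_uidx) ^+ 2
  - 'X_tidx ^+ 2 * (1 + \sum_(j < n) dFz F j ^+ 2).

Definition Geq (F : {mpoly R[n]}) (k : 'I_2) : {mpoly C[Ndim]} :=
  if k == ord0 then G_Y F else psi F.

Definition Sigma (F : {mpoly R[n]}) (p : 'I_Ndim -> C) : Prop :=
  forall k : 'I_2, (Geq F k).@[p] = 0.

Definition jacSigma (F : {mpoly R[n]}) (p : 'I_Ndim -> C) : 'M[C]_(2, Ndim) :=
  \matrix_(k < 2, i < Ndim) (mderiv i (Geq F k)).@[p].

Definition singular_pt (F : {mpoly R[n]}) (p : 'I_Ndim -> C) : Prop :=
  (\rank (jacSigma F p) < 2)%N.

Definition tangent (F : {mpoly R[n]}) (p : 'I_Ndim -> C) (v : 'cV[C]_Ndim) : Prop :=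
  jacSigma F p *m v = 0.

Definition proj (p : 'I_Ndim -> C) : 'I_n.+2 -> C := fun i => p (lshift n.+1 i).

Definition submersion_at (F : {mpoly R[n]}) (p : 'I_Ndim -> C) : Prop :=
  forall w : 'I_n.+2 -> C, exists v : 'cV[C]_Ndim,
    tangent F p v /\ forall i : 'I_n.+2, v (lshift n.+1 i) ord0 = w i.

Definition critical_value (F : {mpoly R[n]}) (xt : 'I_n.+2 -> C) : Prop :=
  exists p : 'I_Ndim -> C,
    [/\ Sigma F p, proj p = xt & (singular_pt F p \/ ~ submersion_at F p)].

(* wave front W_t with initial front Y *)
Definition wave_front (F : {mpoly R[n]}) (t : C) (x : 'I_n.+1 -> C) : Prop :=
  exists (z : 'I_n -> C) (u : C) (s : C) (eps : C),
    [/\ (FC F).@[z] + u = 0,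
        s ^+ 2 = 1 + \sum_(j < n) ((mderiv j (FC F)).@[z]) ^+ 2,
        s != 0,
        (eps = 1 \/ eps = -1) &
        ((forall j : 'I_n,
            x (xpidx j) = eps * t * s^-1 * (mderiv j (FC F)).@[z] + z j) /\
         x ord_max = eps * t * s^-1 + u)].

End WaveFront.

Definition xt_pt (R : realType) (n : nat) (x : 'I_n.+1 -> complex R) (t : complex R)
  : 'I_n.+2 -> complex R :=
  fun i => if unlift ord_max i is Some j then x j else t.

(* Main.v *)
Require Import Defs.
From mathcomp Require Import all_boot all_algebra.
From mathcomp Require Import mpoly complex reals ring.
From Stdlib Require Import FunctionalExtensionality.
Set Implicit Arguments. Unset Strict Implicit. Unset Printing Implicit Defensive.
Import GRing.Theory Num.Theory.
Local Open Scope ring_scope.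


Section Aux.
Variable (C : comNzRingType) (N : nat).
Variable pt : 'I_N -> C.
Variable v : 'I_N -> C.
Definition L (P : {mpoly C[N]}) := \sum_i (mderiv i P).@[pt] * v i.

Lemma LD P Q : L (P + Q) = L P + L Q.
Proof. rewrite /L -big_split; apply: eq_bigr => i _; rewrite mderivD mevalD /=. ring. Qed.
Lemma LN P : L (- P) = - L P.
Proof. rewrite /L -sumrN; apply: eq_bigr => i _; rewrite mderivN mevalN; ring. Qed.
Lemma LB P Q : L (P - Q) = L P - L Q.
Proof. by rewrite LD LN. Qed.
Lemma LM P Q : L (P * Q) = L P * Q.@[pt] + P.@[pt] * L Q.
Proof.
rewrite /L mulr_suml mulr_sumr -big_split; apply: eq_bigr => i _.
rewrite mderivM mevalD !mevalM /=; ring.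
Qed.
Lemma LC c : L c%:MP = 0.
Proof. rewrite /L big1 // => i _; rewrite mderivC meval0; ring. Qed.
Lemma L1 : L 1 = 0.
Proof. exact: LC. Qed.
Lemma LZ c P : L (c *: P) = c * L P.
Proof. rewrite /L mulr_sumr; apply: eq_bigr => i _; rewrite mderivZ mevalZ; ring. Qed.
Lemma mderivXU_eval (i j : 'I_N) (w : 'I_N -> C) : (mderiv i 'X_j).@[w] = (j == i)%:R.
Proof.
rewrite mderivX mevalZ mevalX mnm1E; case: eqP => [->|_]; last by rewrite mul0r.
rewrite mul1r big1 // => k _; by rewrite mnmBE subnn expr0.
Qed.
Lemma LX j : L 'X_j = v j.
Proof.
rewrite /L (bigD1 j) //= big1 ?addr0 => [|k hk]; rewrite mderivXU_eval ?eqxx ?mul1r //.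
by rewrite eq_sym (negbTE hk) mul0r.
Qed.
Lemma Lsq P : L (P ^+ 2) = 2 * P.@[pt] * L P.
Proof. rewrite expr2 LM; ring. Qed.
End Aux.
Arguments L {C N}.
Arguments mderivXU_eval {C N}.

Section Chain.
Variable (C : comNzRingType) (N k : nat).
Variable pt : 'I_N -> C.
Variable v : 'I_N -> C.
Variable lq : k.-tuple {mpoly C[N]}.
Let w := fun a => (tnth lq a).@[pt].
Definition Ch (P : {mpoly C[k]}) :=
  L pt v (P \mPo lq) = \sum_(j < k) (mderiv j P).@[w] * L pt v (tnth lq j).

Lemma L0 : L pt v 0 = 0.
Proof. by rewrite -(mpolyC0) LC. Qed.

Lemma ChD P Q : Ch P -> Ch Q -> Ch (P + Q).
Proof.
rewrite /Ch => hP hQ; rewrite comp_mpolyD LD hP hQ -big_split /=.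
by apply: eq_bigr => j _; rewrite mderivD mevalD mulrDl.
Qed.
Lemma ChZ c P : Ch P -> Ch (c *: P).
Proof.
rewrite /Ch => hP; rewrite comp_mpolyZ LZ hP mulr_sumr.
by apply: eq_bigr => j _; rewrite mderivZ mevalZ mulrA.
Qed.
Lemma ChM P Q : Ch P -> Ch Q -> Ch (P * Q).
Proof.
rewrite /Ch => hP hQ; rewrite rmorphM LM hP hQ !comp_mpoly_meval -/w.
rewrite mulr_suml mulr_sumr -big_split /=.
by apply: eq_bigr => j _; rewrite mderivM mevalD !mevalM /=; ring.
Qed.
Lemma ChC c : Ch c%:MP.
Proof.
rewrite /Ch comp_mpolyC LC big1 // => j _; by rewrite mderivC meval0 mul0r.
Qed.
Lemma ChX i : Ch 'X_i.
Proof.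
rewrite /Ch comp_mpolyXU -tnth_nth (bigD1 i) //= big1 ?addr0 => [|j hj];
  rewrite mderivXU_eval ?eqxx ?mul1r //.
by rewrite eq_sym (negbTE hj) mul0r.
Qed.
Lemma ChXm m : Ch 'X_[m].
Proof.
rewrite mpolyXE_id; apply: (big_ind Ch); [exact: (ChC 1)|exact: ChM|].
move=> i _; elim: (m i) => [|e ih]; first by rewrite expr0; exact: (ChC 1).
by rewrite exprS; apply: ChM => //; exact: ChX.
Qed.
Lemma chain P : Ch P.
Proof.
elim/mpolyind: P => [|c m P _ _ ih]; last by apply: ChD => //; apply: ChZ; exact: ChXm.
rewrite /Ch comp_mpoly0 L0 big1 // => j _; by rewrite mderiv0 meval0 mul0r.
Qed.
End Chain.

Lemma widen_lift m (j : 'I_m) : widen_ord (leqnSn m) j = lift ord_max j.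
Proof. apply: val_inj; exact: (esym (lift_max j)). Qed.

Lemma Lsum (C : comNzRingType) N (pt v : 'I_N -> C) k (Fs : 'I_k -> {mpoly C[N]}) :
  L pt v (\sum_(j < k) Fs j) = \sum_(j < k) L pt v (Fs j).
Proof. exact: (big_morph _ (LD pt v) (L0 pt v)). Qed.

Lemma Ldelta (C : comNzRingType) N (pt : 'I_N -> C) i P :
  L pt (fun j => (j == i)%:R) P = (mderiv i P).@[pt].
Proof.
rewrite /L (bigD1 i) //= eqxx mulr1 big1 ?addr0 // => j hj.
by rewrite (negbTE hj) mulr0.
Qed.

Theorem lemma1 (R : realType) (n : nat) (F : {mpoly R[n]})
  (x : 'I_n.+1 -> complex R) (t : complex R) :
  (1 <= n)%N ->
  wave_front F t x ->
  critical_value F (xt_pt x t).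
Proof.
move=> _ [z [u [s [eps [hY hs hs0 heps [hx hxn]]]]]].
pose pt : 'I_(Ndim n) -> complex R := fun i =>
  match @split n.+2 n.+1 i with
  | inl a => xt_pt x t a
  | inr b => if unlift ord_max b is Some k then z k else u end.
have ptx j : pt (xidx j) = x j.
  by rewrite /pt /xidx (unsplitK (inl _)) /xt_pt widen_lift liftK.
have ptt : pt (tidx n) = t by rewrite /pt /tidx (unsplitK (inl _)) /xt_pt unlift_none.
have ptz j : pt (zidx j) = z j.
  by rewrite /pt /zidx (unsplitK (inr _)) widen_lift liftK.
have ptu : pt (uidx n) = u by rewrite /pt /uidx (unsplitK (inr _)) unlift_none.
have pproj : proj pt = xt_pt x t.
  by apply: functional_extensionality => i; rewrite /proj /pt (unsplitK (inl _)).
have compz P : (P \mPo zvars R n).@[pt] = P.@[z].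
  rewrite comp_mpoly_meval; apply: meval_eq => j.
  by rewrite tnth_mktuple mevalXU ptz.
pose D j := ((FC F)^`M(j)).@[z].
have edF j : (dFz F j).@[pt] = D j by exact: compz.
pose S : {mpoly (complex R)[Ndim n]} :=
  \sum_(j < n) ('X_(xidx (xpidx j)) - 'X_(zidx j)) * dFz F j
     + 'X_(xidx ord_max) - 'X_(uidx n).
pose T : {mpoly (complex R)[Ndim n]} := 1 + \sum_(j < n) dFz F j ^+ 2.
have epsi : psi F = S ^+ 2 - 'X_(tidx n) ^+ 2 * T by [].
have hSD : \sum_(j < n) D j ^+ 2 = s ^+ 2 - 1 by rewrite hs; ring.
have eS : S.@[pt] = eps * t * s.
  rewrite /S mevalB mevalD (big_morph _ (mevalD pt) (meval0 pt)) !mevalXU ptx ptu hxn.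
  under eq_bigr => j _ do rewrite mevalM mevalB !mevalXU ptx ptz edF hx.
  have -> : \sum_(j < n) ((eps * t / s * D j + z j - z j) * D j) =
     eps * t / s * \sum_(j < n) D j ^+ 2.
    by rewrite mulr_sumr; apply: eq_bigr => j _; rewrite /D; ring.
  by rewrite hSD; field.
have eT : T.@[pt] = s ^+ 2.
  rewrite /T mevalD meval1 (big_morph _ (mevalD pt) (meval0 pt)) hs; congr (_ + _).
  by apply: eq_bigr => j _; rewrite rmorphXn /= edF.
have eps2 : eps ^+ 2 = 1 by case: heps => ->; ring.
have hSig : Sigma F pt.
  move=> k; rewrite /Geq; case: eqP => _.
    by rewrite /G_Y mevalD compz mevalXU ptu hY.
  rewrite epsi mevalB !mevalM eS eT mevalXU ptt.
  transitivity (eps ^+ 2 * t ^+ 2 * s ^+ 2 - t ^+ 2 * s ^+ 2); first by ring.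
  by rewrite eps2; ring.
have LS v : L pt v S = \sum_(j < n) ((v (xidx (xpidx j)) - v (zidx j)) * D j
      + (x (xpidx j) - z j) * L pt v (dFz F j)) + v (xidx ord_max) - v (uidx n).
  rewrite /S LB LD Lsum !LX; congr (_ + _ - _); apply: eq_bigr => j _.
  by rewrite LM LB !LX edF mevalB !mevalXU ptx ptz.
have LT v : L pt v T = \sum_(j < n) 2 * D j * L pt v (dFz F j).
  rewrite /T LD L1 add0r Lsum; apply: eq_bigr => j _.
  by rewrite Lsq edF.
have Lpsi v : L pt v (psi F) = 2 * (eps * t * s) * L pt v S
     - (2 * t * v (tidx n) * s ^+ 2 + t ^+ 2 * L pt v T).
  by rewrite epsi LB Lsq LM Lsq eS eT rmorphXn /= !mevalXU ptt LX.
have LG v : L pt v (G_Y F) = \sum_(j < n) D j * v (zidx j) + v (uidx n).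
  rewrite /G_Y LD LX /Fz chain; congr (_ + _); apply: eq_bigr => j _.
  rewrite tnth_mktuple LX; congr (_ * _); apply: meval_eq => i.
  by rewrite tnth_mktuple mevalXU ptz.
exists pt; split => //.
have jacE k i : jacSigma F pt k i = L pt (fun j => (j == i)%:R) (Geq F k).
  by rewrite mxE Ldelta.
case: (eqVneq t 0) => [t0|tn0].
  left; rewrite /singular_pt.
  have -> : jacSigma F pt = delta_mx ord0 ord0 *m jacSigma F pt.
    apply/matrixP => k i; rewrite !mxE big_ord_recl big_ord1 !mxE.
    case: k => [[|[|//]] hk] /=.
      have -> : Ordinal hk = ord0 by apply: val_inj.
      by rewrite mul1r mul0r addr0.
    rewrite mul0r mul0r addr0 -Ldelta /Geq /= Lpsi t0; ring.
  by rewrite (leq_ltn_trans (mxrankM_maxl _ _)) // mxrank_delta.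
right => hsub.
have [v [hv hvw]] := hsub (fun i => (i == ord_max)%:R).
pose vf j := v j ord0.
have tang k : L pt vf (Geq F k) = 0.
  have := congr1 (fun M : 'cV_2 => M k ord0) hv; rewrite /= !mxE => <-.
  by apply: eq_bigr => i _; rewrite mxE.
have vx j : vf (xidx j) = 0.
  rewrite /vf /xidx hvw widen_lift.
  by rewrite eq_sym (negbTE (neq_lift _ _)).
have vt : vf (tidx n) = 1 by rewrite /vf /tidx hvw eqxx.
have hG := tang ord0; rewrite /Geq eqxx LG in hG.
have hP := tang ord_max; rewrite /Geq /= Lpsi LS LT vx vt in hP.
pose Ll := \sum_(j < n) D j * L pt vf (dFz F j).
pose Z := \sum_(j < n) D j * vf (zidx j).
have e1 : \sum_(j < n) ((vf (xidx (xpidx j)) - vf (zidx j)) * D j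
      + (x (xpidx j) - z j) * L pt vf (dFz F j)) = - Z + eps * t / s * Ll.
  rewrite /Z /Ll mulr_sumr -sumrN -big_split; apply: eq_bigr => j _.
  rewrite vx hx /=; ring.
have e2 : \sum_(j < n) 2 * D j * L pt vf (dFz F j) = 2 * Ll.
  by rewrite /Ll mulr_sumr; apply: eq_bigr => j _; ring.
have eZ : Z = - vf (uidx n) by rewrite -[Z]subr0 -hG /Z; ring.
rewrite e1 e2 eZ in hP.
have h0 : - (2 * t * s ^+ 2) = 0.
  rewrite -hP; case: heps => ->; field; exact: hs0.
move: h0; apply/eqP; rewrite oppr_eq0 !mulf_neq0 ?expf_neq0 //.
by rewrite pnatr_eq0.
Qed.
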